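(* For all integers $n\geq0$, \[ \sum_{j=0}^n\binom{2(n-j)}{n-j}C_jO_{n-j}=\frac12\binom{2(n+1)}{n+1}O_{n+1}-\frac{4^n}{n+1}. \]
   Context: $O_n=\sum_{j=1}^n\frac1{2j-1}$ ($O_0=0$), and $C_n=\frac1{n+1}\binom{2n}{n}$ is the $n$th Catalan number. *)

(* Defs.v *)
From mathcomp Require Import all_boot all_order all_algebra.
Set Implicit Arguments. Unset Strict Implicit. Unset Printing Implicit Defensive.
Import Order.TTheory GRing.Theory Num.Theory.
Local Open Scope ring_scope.

Definition Oodd (n : nat) : rat := \sum_(1 <= j < n.+1) ((2 * j - 1)%N%:R)^-1.

Definition catalan (n : nat) : rat := ('C(2 * n, n))%:R / (n.+1)%:R.

(* Main.v *)
Require Import Defs.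
From mathcomp Require Import all_boot all_order all_algebra.
From mathcomp Require Import ring zify.
Import Order.TTheory GRing.Theory Num.Theory.
Local Open Scope ring_scope.

Definition b (k : nat) : rat := ('C(2 * k, k))%:R.
Definition h (i : nat) : rat := 4 ^+ i / (2 * i)%N%:R.

Lemma bS_nat k : k.+1 * 'C(2 * k.+1, k.+1) = 2 * (2 * k + 1) * 'C(2 * k, k).
Proof.
have e1 := mul_bin_diag (2 * k).+2 k.
have e2 := mul_bin_left (2 * k).+1 k.
have e3 := mul_bin_diag (2 * k).+1 k.
have -> : (2 * k.+1 = (2 * k).+2)%N by lia.
move: e1 e2 e3 => /= e1 e2 e3.
have E : ((2 * k).+1 - k = k.+1)%N by lia.
rewrite E in e2.
nia.
Qed.

Lemma bS k : b k.+1 = b k * (2 * (2 * k + 1))%N%:R / k.+1%:R.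
Proof.
rewrite /b; apply: (mulIf (x := k.+1%:R)); first by rewrite pnatr_eq0.
rewrite mulfVK ?pnatr_eq0 // -!natrM; congr (_%:R).
have H := bS_nat k; rewrite mulnC [in RHS]mulnC; exact: H.
Qed.

Lemma b0 : b 0 = 1. Proof. by rewrite /b. Qed.

Ltac nz := rewrite -[1]/(1%:R) -?natrD ?pnatr_eq0; lia.

Lemma natr_neq0 (n : nat) : (n.+1)%:R != 0 :> rat.
Proof. by rewrite pnatr_eq0. Qed.

Lemma catalanE k : catalan k = 2 * b k - b k.+1 / 2.
Proof.
rewrite /catalan bS -/(b k).
have := natr_neq0 k.
rewrite !natrM !natrD. move=> H. field. nz.
Qed.

Lemma sumB m : \sum_(j < m.+1) catalan j * b (m - j) = b m.+1 / 2.
Proof.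
pose P j := (m.+1 - j)%N%:R * b j * b (m.+1 - j) / m.+1%:R.
have T : forall j, (j < m.+1)%N -> catalan j * b (m - j) = (P j - P j.+1) / 2.
  move=> j Hj; rewrite /P.
  have [k Ek] : exists k, m = (j + k)%N by exists (m - j)%N; lia.
  subst m.
  have -> : ((j + k).+1 - j = k.+1)%N by lia.
  have -> : ((j + k).+1 - j.+1 = k)%N by lia.
  have -> : ((j + k) - j = k)%N by lia.
  rewrite !bS /catalan -/(b j).
  have h1 := natr_neq0 k. have h2 := natr_neq0 j. have h3 := natr_neq0 (j + k).
  rewrite !natrM !natrD /= in h1 h2 h3 *.
  field. nz.
rewrite (eq_bigr (fun j : 'I_m.+1 => (P j - P j.+1) / 2)); last by move=> j _; apply: T.
rewrite -mulr_suml -(big_mkord xpredT (fun j => P j - P j.+1)).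
under eq_bigr do rewrite -opprB.
rewrite sumrN telescope_sumr // /P subnn subn0 b0 mul0r mul0r.
field. nz.
Qed.

Lemma sumE k : \sum_(i < k.+1) 4 ^+ i * catalan (k - i) = 2 * 4 ^+ k - 2 * b k + catalan k.
Proof.
elim: k => [|k IH].
  by rewrite big_ord_recl big_ord0 b0 /=; ring.
rewrite big_ord_recl /=.
under eq_bigr => i _ do rewrite /bump /= add1n subSS exprS -mulrA.
rewrite -mulr_sumr IH subn0 (catalanE k) exprS.
move: (b k) (b k.+1) (catalan k.+1) (4 ^+ k) => x y z w; by field.
Qed.

Lemma OoddS k : Oodd k.+1 = Oodd k + ((2 * k + 1)%N%:R)^-1.
Proof.
rewrite /Oodd big_nat_recr //=; congr (_ + _ ^-1); congr (_%:R); lia.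
Qed.

Lemma Oodd0 : Oodd 0 = 0. Proof. by rewrite /Oodd big_geq. Qed.

Lemma h0 : h 0 = 0. Proof. by rewrite /h muln0 invr0 mulr0. Qed.

Lemma Tshift k : \sum_(i < k.+1) b (k - i) * h i = \sum_(i < k) b (k - i.+1) * h i.+1.
Proof. by rewrite big_ord_recl h0 mulr0 add0r. Qed.

Lemma sumA k : b k * Oodd k = \sum_(i < k.+1) b (k - i) * h i.
Proof.
elim: k => [|k IH].
  by rewrite big_ord_recl big_ord0 h0 Oodd0 !mulr0 addr0.
apply: (mulIf (natr_neq0 k)).
have e1 : \sum_(i < k.+2) b (k.+1 - i) * h i = \sum_(i < k) b (k - i) * h i.+1 + h k.+1.
  by rewrite Tshift big_ord_recr /= subnn b0 mul1r.
have e2 : \sum_(i < k) b (k - i) * h i.+1 * k.+1%:R =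
   (4 * k + 2)%N%:R * \sum_(i < k) b (k - i.+1) * h i.+1
   - \sum_(i < k) 4 ^+ i.+1 * catalan (k - i.+1).
  rewrite mulr_sumr -sumrB; apply: eq_bigr => [[i Hi]] _ /=.
  have [r Er] : exists r, k = (i.+1 + r)%N by exists (k - i.+1)%N; lia.
  rewrite Er.
  have -> : (i.+1 + r - i = r.+1)%N by lia.
  have -> : (i.+1 + r - i.+1 = r)%N by lia.
  rewrite bS /catalan /h -/(b r).
  have h1 := natr_neq0 r. have h2 := natr_neq0 i.
  rewrite !natrM !natrD /= in h1 h2 *.
  field. nz.
have e4 : \sum_(i < k) 4 ^+ i.+1 * catalan (k - i.+1) = 2 * 4 ^+ k - 2 * b k.
  have := sumE k; rewrite big_ord_recl /= subn0 expr0 mul1r => H.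
  apply: (addIr (catalan k)); rewrite addrC.
  exact: H.
rewrite e1 mulrDl mulr_suml e2 e4 -Tshift -IH OoddS bS /h.
have h1 := natr_neq0 k.
rewrite !natrM !natrD /= in h1 *.
rewrite exprS; move: (b k) (Oodd k) (4 ^+ k) => x y z.
field. nz.
Qed.

Theorem corollary3 (n : nat) :
  \sum_(0 <= j < n.+1)
      ('C(2 * (n - j), n - j))%:R * catalan j * Oodd (n - j)
  = 2^-1 * ('C(2 * n.+1, n.+1))%:R * Oodd n.+1 - (4 ^ n)%N%:R / (n.+1)%:R :> rat.
Proof.
rewrite -/(b n.+1) big_mkord.
have -> : \sum_(j < n.+1) b (n - j) * catalan j * Oodd (n - j)
   = \sum_(j < n.+1) catalan j * \sum_(i < (n - j).+1) h i * b (n - j - i).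
  apply: eq_bigr => j _; rewrite mulrAC mulrC sumA; congr (_ * _).
  by apply: eq_bigr => i _; rewrite mulrC.
pose pc := \poly_(i < n.+1) catalan i.
pose pb := \poly_(i < n.+2) b i.
pose ph := \poly_(i < n.+2) h i.
have Cc : forall i, (i <= n)%N -> pc`_i = catalan i by move=> i Hi; rewrite coef_poly ltnS Hi.
have Cb : forall i, (i <= n)%N -> pb`_i = b i by move=> i Hi; rewrite coef_poly ltnS (leqW Hi).
have Ch : forall i, (i <= n)%N -> ph`_i = h i by move=> i Hi; rewrite coef_poly ltnS (leqW Hi).
have -> : \sum_(j < n.+1) catalan j * \sum_(i < (n - j).+1) h i * b (n - j - i)
   = (pc * (ph * pb))`_n.
  rewrite coefM; apply: eq_bigr => [[j Hj]] _ /=.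
  rewrite Cc; last lia; rewrite coefM; congr (_ * _); apply: eq_bigr => [[i Hi]] _ /=.
  by rewrite Ch ?Cb //; lia.
rewrite mulrCA coefM.
have -> : \sum_(i < n.+1) ph`_i * (pc * pb)`_(n - i) = \sum_(i < n.+1) h i * (b (n - i).+1 / 2).
  apply: eq_bigr => [[i Hi]] _ /=.
  rewrite Ch; last lia; rewrite coefM -sumB; congr (_ * _); apply: eq_bigr => [[j Hj]] _ /=.
  by rewrite Cc ?Cb //; lia.
rewrite -mulrA sumA [\sum_(i < n.+2) _]big_ord_recr /= subnn b0 mul1r.
have -> : \sum_(i < n.+1) b (n.+1 - i) * h i = \sum_(i < n.+1) h i * b (n - i).+1.
  by apply: eq_bigr => [[i Hi]] _ /=; rewrite mulrC subSn.
rewrite mulrDr mulr_sumr.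
have -> : \sum_(i < n.+1) h i * (b (n - i).+1 / 2) = \sum_(i < n.+1) 2^-1 * (h i * b (n - i).+1).
  by apply: eq_bigr => i _; rewrite mulrA mulrC.
rewrite /h natrX exprS.
have h1 := natr_neq0 n.
rewrite ?natrM ?natrD /= in h1 *.
move: (\sum_(i < n.+1) _) (4 ^+ n) => x y.
field. nz.
Qed.
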